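(* Let $b,n$ be positive integers, $c$ a nonnegative integer, and $a_2,\dots,a_n$ integers. With $\mathbf a=(0,0,a_2,\dots,a_n,-\sum_{j=2}^n a_j)$ and $\tilde{\mathbf a}=(0,a_2,\dots,a_n,-\sum_{j=2}^n a_j)$, $$K_{k^{1,b,c}_{n+2}}(\mathbf a)=K_{k^{c+1,b,c}_{n+1}}(\tilde{\mathbf a}).$$
   Context: For a positive integer $m$ and nonnegative integers $a,b,c$, $k_{m+2}^{a,b,c}$ is the directed multigraph on vertex set $\{0,1,\dots,m+1\}$ with edge $(0,i)$ of multiplicity $a$ and edge $(i,m+1)$ of multiplicity $b$ for each $i\in[m]$, and edge $(i,j)$ of multiplicity $c$ for $1\le i<j\le m$; edges $(i,j)$ are oriented $i\to j$. For such a graph $G$ on $\{0,\dots,m+1\}$ and a vector $\mathbf v=(v_0,\dots,v_{m+1})$ with $\sum v_i=0$, $K_G(\mathbf v)$ is the number of $f\in\mathbb Z_{\ge0}^{E(G)}$ such that the net flow (outgoing minus incoming) at each vertex $u$ equals $v_u$. (Here $k^{1,b,c}_{n+2}$ has vertices $0,\dots,n+1$ and $k^{c+1,b,c}_{n+1}$ has vertices $0,\dots,n$.) *)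

(* Defs.v *)
From HB Require Import structures.
From mathcomp Require Import all_boot all_order all_algebra.
Set Implicit Arguments. Unset Strict Implicit. Unset Printing Implicit Defensive.
Import Order.TTheory GRing.Theory Num.Theory.
Local Open Scope ring_scope.

Record mgraph := MGraph { nv : nat; mult : 'I_nv -> 'I_nv -> nat }.

Definition edge (G : mgraph) : finType :=
  {x : 'I_(nv G) * 'I_(nv G) & 'I_(mult x.1 x.2)}.

Definition esrc G (e : edge G) : 'I_(nv G) := (tag e).1.
Definition etgt G (e : edge G) : 'I_(nv G) := (tag e).2.

Definition netflow G (f : {ffun edge G -> nat}) (u : 'I_(nv G)) : int :=
  \sum_(e : edge G | esrc e == u) (f e)%:Z - \sum_(e : edge G | etgt e == u) (f e)%:Z.

Definition is_flow G (v : 'I_(nv G) -> int) (f : {ffun edge G -> nat}) : Prop :=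
  forall u, netflow f u = v u.

Definition has_count (T : Type) (P : T -> Prop) (n : nat) : Prop :=
  exists h : 'I_n -> T, injective h /\ (forall x, P x <-> exists i, h i = x).

Definition K_eq (G : mgraph) (v : 'I_(nv G) -> int) (n : nat) : Prop :=
  has_count (is_flow v) n.

Definition kmult (m a b c : nat) (i j : 'I_m.+2) : nat :=
  if ((val i == 0)%N && (1 <= val j <= m)%N) then a
  else if ((1 <= val i <= m)%N && (val j == m.+1)%N) then b
  else if ((1 <= val i)%N && (val i < val j)%N && (val j <= m)%N) then c
  else 0%N.

Definition kgraph (m a b c : nat) : mgraph := @MGraph m.+2 (@kmult m a b c).

Definition vec_of (G : mgraph) (w : nat -> int) : 'I_(nv G) -> int :=
  fun i => w (val i).

(* Main.v *)
Require Import Defs.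
From HB Require Import structures.
From mathcomp Require Import all_boot all_order all_algebra.
From mathcomp Require Import zify.
Import Order.TTheory GRing.Theory Num.Theory.
Local Open Scope ring_scope.

Section Gen.
Variable G : mgraph.

Implicit Types f : {ffun edge G -> nat}.
Definition Efam := (fun x : 'I_(nv G) * 'I_(nv G) => 'I_(mult x.1 x.2)).

Definition R (f : {ffun edge G -> nat}) (i j : 'I_(nv G)) (k : nat) : nat :=
  match (insub k : option 'I_(mult i j)) with
  | Some k' => f (existT Efam (i, j) k') | None => 0%N end.

Lemma R_lt f i j k (hk : (k < mult i j)%N) :
  R f i j k = f (existT Efam (i, j) (Ordinal hk)).
Proof. by rewrite /R insubT. Qed.

Lemma R_ge f i j k : (mult i j <= k)%N -> R f i j k = 0%N.
Proof. by move=> h; rewrite /R insubF // ltnNge h. Qed.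

Lemma R_e f (e : edge G) : R f (esrc e) (etgt e) (tagged e) = f e.
Proof. by case: e => [[i j] k]; rewrite /R /esrc /etgt /= valK. Qed.

Lemma sumZ (I : finType) (P : pred I) (F : I -> nat) :
  ((\sum_(i | P i) F i)%N)%:Z = \sum_(i | P i) (F i)%:Z.
Proof. exact: (big_morph Posz PoszD). Qed.

Definition outs (f : {ffun edge G -> nat}) u := (\sum_(e : edge G | esrc e == u) f e)%N.
Definition ins (f : {ffun edge G -> nat}) u := (\sum_(e : edge G | etgt e == u) f e)%N.

Lemma netflowE f u : netflow f u = (outs f u)%:Z - (ins f u)%:Z.
Proof. by rewrite /netflow /outs /ins !sumZ. Qed.

Lemma sum_edges (P : pred ('I_(nv G) * 'I_(nv G))) (F : edge G -> nat) :
  (\sum_(e : edge G | P (tag e)) F e =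
   \sum_(x | P x) \sum_(k < mult x.1 x.2) F (existT Efam x k))%N.
Proof.
rewrite (sig_big_dep P (fun _ _ => true) (fun x k => F (existT Efam x k))) /=.
by apply: eq_big => [[x k]|[x k]] //=; rewrite andbT.
Qed.

Lemma sumR f (x : 'I_(nv G) * 'I_(nv G)) :
  (\sum_(k < mult x.1 x.2) f (existT Efam x k) = \sum_(0 <= k < mult x.1 x.2) R f x.1 x.2 k)%N.
Proof.
case: x => i j /=; rewrite big_mkord; apply: eq_bigr => k _.
rewrite (@R_lt f i j k (ltn_ord k)). congr (f (existT _ _ _)). by apply: val_inj.
Qed.

Lemma outsE f u : outs f u = (\sum_(j < nv G) \sum_(0 <= k < mult u j) R f u j k)%N.
Proof.
rewrite /outs (sum_edges (fun x => x.1 == u)).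
under eq_bigr do rewrite sumR.
rewrite (eq_bigl (fun x => (x.1 == u) && true)); last by move=> x; rewrite andbT.
rewrite -(pair_big_dep (fun i => i == u) (fun _ _ => true)
   (fun i j => \sum_(0 <= k < mult i j) R f i j k)%N) /=.
by rewrite big_pred1_eq.
Qed.

Lemma insE f u : ins f u = (\sum_(i < nv G) \sum_(0 <= k < mult i u) R f i u k)%N.
Proof.
rewrite /ins (sum_edges (fun x => x.2 == u)).
under eq_bigr do rewrite sumR.
rewrite (eq_bigl (fun x => true && (x.2 == u))); last by [].
rewrite -(pair_big_dep (fun _ => true) (fun _ j => j == u)
   (fun i j => \sum_(0 <= k < mult i j) R f i j k)%N) /=.
by apply: eq_bigr => i _; rewrite big_pred1_eq.
Qed.
Lemma mult_pos (e : edge G) : (0 < mult (esrc e) (etgt e))%N.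
Proof. by case: e => [[i j] k] /=; rewrite /esrc /etgt /=; case: k => k /= /(leq_ltn_trans _); apply. Qed.

Lemma sum_src (F : 'I_(nv G) -> nat) (h : edge G -> 'I_(nv G)) f :
  (\sum_(u < nv G) F u * \sum_(e : edge G | h e == u) f e = \sum_(e : edge G) F (h e) * f e)%N.
Proof.
rewrite (partition_big h xpredT) //=; apply: eq_bigr => u _.
rewrite big_distrr /=; apply: eq_bigr => e /eqP -> //.
Qed.

Lemma zero_out (v : 'I_(nv G) -> int) f u : is_flow v f -> v u = 0 ->
  (forall e : edge G, etgt e = u -> f e = 0%N) -> forall e : edge G, esrc e = u -> f e = 0%N.
Proof.
move=> Hf Hv Hin e He.
have Hi : ins f u = 0%N by rewrite /ins big1 // => e' /eqP; exact: Hin.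
have : Posz (outs f u) = Posz 0 by have := Hf u; rewrite netflowE Hv Hi subr0.
case=> /eqP; rewrite /outs sum_nat_eq0 => /forallP /(_ e).
by rewrite He eqxx /= => /eqP.
Qed.

Lemma Rzero f (i j : 'I_(nv G)) k :
  (forall e : edge G, esrc e = i -> f e = 0%N) -> R f i j k = 0%N.
Proof.
move=> Z; case: (ltnP k (mult i j)) => hk; last exact: R_ge.
by rewrite (@R_lt f i j k hk); apply: Z.
Qed.

Hypothesis Hacyc : forall i j : 'I_(nv G), (0 < @mult G i j)%N -> (i < j)%N.

Lemma flow_bound v f : is_flow v f ->
  forall e, (f e <= absz (\sum_(u < nv G) (u : nat)%:Z * v u)%R)%N.
Proof.
move=> Hf e.
set D := (\sum_(e : edge G) (etgt e - esrc e) * f e)%N.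
have HSi : (\sum_(e : edge G) etgt e * f e = \sum_(e : edge G) esrc e * f e + D)%N.
  rewrite /D -big_split /=; apply: eq_bigr => e' _.
  have := Hacyc _ _ (mult_pos e'); rewrite -mulnDl => h.
  by congr (_ * _); lia.
have -> : (\sum_(u < nv G) (u : nat)%:Z * v u) = - (D%:Z).
  transitivity (\sum_(u < nv G) (((u : nat) * outs f u)%N%:Z - ((u : nat) * ins f u)%N%:Z)).
    by apply: eq_bigr => u _; rewrite -Hf netflowE mulrBr !PoszM.
  rewrite sumrB -!sumZ /outs /ins !(sum_src (fun u : 'I_(nv G) => (u : nat))) HSi PoszD.
  by rewrite opprD addrA subrr add0r.
rewrite abszN absz_nat /D (bigD1 e) //=.
apply: leq_trans (leq_addr _ _).
have := Hacyc _ _ (mult_pos e); move=> h; rewrite leq_pmull //; lia.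
Qed.
Lemma Zup f (u : 'I_(nv G)) : (forall e : edge G, (esrc e <= u)%N -> f e = 0%N) -> netflow f u = 0.
Proof.
move=> H; rewrite netflowE /outs /ins !big1 // => e /eqP Hu; apply: H.
all: have h : (esrc e < etgt e)%N := Hacyc _ _ (mult_pos e).
all: have h2 := f_equal (@nat_of_ord _) Hu.
all: lia.
Qed.

Lemma flow_finite (v : 'I_(nv G) -> int) : exists K, @K_eq G v K.
Proof.
set B := absz (\sum_(u < nv G) (u : nat)%:Z * v u)%R.
pose T := {ffun edge G -> 'I_B.+1}.
pose emb (t : T) : {ffun edge G -> nat} := [ffun e => val (t e)].
pose A := [set t : T | [forall u, netflow (emb t) u == v u]].
exists #|A|; exists (fun i => emb (enum_val i)); split.
  move=> i j /= H; apply: enum_val_inj; apply/ffunP => e; apply: val_inj.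
  by move/ffunP: H => /(_ e); rewrite !ffunE.
move=> x; split.
  move=> Hx; have Hb := @flow_bound v x Hx.
  pose t : T := [ffun e => inord (x e)].
  have Hem : emb t = x by apply/ffunP => e; rewrite /emb /t !ffunE /= inordK // ltnS Hb.
  have Ht : t \in A by rewrite inE Hem; apply/forallP => u; apply/eqP; exact: Hx u.
  by exists (enum_rank_in Ht t); rewrite enum_rankK_in.
move=> [i <-] u.
by have := enum_valP i; rewrite inE => /forallP /(_ u) /eqP.
Qed.
End Gen.

Lemma count_transport (A B : Type) (P : A -> Prop) (Q : B -> Prop)
  (phi : A -> B) (psi : B -> A) (K : nat) :
  (forall x, P x -> Q (phi x)) -> (forall y, Q y -> P (psi y)) ->
  (forall x, P x -> psi (phi x) = x) -> (forall y, Q y -> phi (psi y) = y) ->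
  Defs.has_count P K -> Defs.has_count Q K.
Proof.
move=> HPQ HQP H1 H2 [h [hinj hP]].
exists (fun i => phi (h i)); split.
  move=> i j /= E.
  have Pi : P (h i) by apply/hP; exists i.
  have Pj : P (h j) by apply/hP; exists j.
  by apply: hinj; rewrite -(H1 _ Pi) -(H1 _ Pj) E.
move=> y; split.
  move=> Qy; have /hP [i Hi] := HQP _ Qy.
  by exists i; rewrite Hi H2.
by move=> [i <-]; apply: HPQ; apply/hP; exists i.
Qed.

Lemma ord_eq m (i j : 'I_m) : nat_of_ord i = nat_of_ord j -> i = j.
Proof. exact: val_inj. Qed.

Lemma kacyc m a b c (i j : 'I_m.+2) : (0 < @kmult m a b c i j)%N -> (i < j)%N.
Proof.
case: i j => [i hi] [j hj]; rewrite /kmult /=.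
by do ![case: ifP] => //; lia.
Qed.

Section Spec.
Variables (n b c : nat).
Definition G1 := kgraph n.+1 1 b c.
Definition G2 := kgraph n c.+1 b c.
Definition dn (i : 'I_n.+3) : 'I_n.+2 := inord i.-1.

Lemma dn_lift (u : 'I_n.+2) : dn (lift ord0 u) = u.
Proof. by apply: val_inj; rewrite /dn /= inordK // ltn_ord. Qed.

Lemma lift_dn (i : 'I_n.+3) : (1 <= i)%N -> lift ord0 (dn i) = i.
Proof.
move=> h; apply: val_inj; rewrite /= /bump /= add1n /dn inordK.
all: have := ltn_ord i; lia.
Qed.

Lemma kmult_up (u j : 'I_n.+2) : (1 <= u)%N ->
  @kmult n.+1 1 b c (lift ord0 u) (lift ord0 j) = @kmult n c.+1 b c u j.
Proof.
case: u j => [u hu] [j hj] /= h; rewrite /kmult /= /bump /= !add1n.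
by do ![case: ifP] => //; lia.
Qed.

Lemma kmult_j0 m a b' c' (i : 'I_m.+2) : @kmult m a b' c' i ord0 = 0%N.
Proof. by apply/eqP; rewrite -leqn0 leqNgt; apply/negP => /kacyc. Qed.

Lemma acyc1 (e : edge G1) : (esrc e < etgt e)%N.
Proof. exact: (@kacyc _ _ _ _ _ _ (@mult_pos _ e)). Qed.
Lemma acyc2 (e : edge G2) : (esrc e < etgt e)%N.
Proof. exact: (@kacyc _ _ _ _ _ _ (@mult_pos _ e)). Qed.

Definition phi (f1 : {ffun edge G1 -> nat}) : {ffun edge G2 -> nat} :=
  [ffun e : edge G2 => if (1 <= esrc e)%N then
     R G1 f1 (lift ord0 (esrc e : 'I_n.+2)) (lift ord0 (etgt e : 'I_n.+2)) (tagged e) else 0%N].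
Definition psi (f2 : {ffun edge G2 -> nat}) : {ffun edge G1 -> nat} :=
  [ffun e : edge G1 => if (2 <= esrc e)%N then
     R G2 f2 (dn (esrc e)) (dn (etgt e)) (tagged e) else 0%N].

Lemma Rphi (f1 : {ffun edge G1 -> nat}) (u j : 'I_n.+2) k : (1 <= u)%N -> (k < @mult G2 u j)%N ->
  R G2 (phi f1) u j k = R G1 f1 (lift ord0 u) (lift ord0 j) k.
Proof. by move=> hu hk; rewrite (@R_lt G2 (phi f1) u j k hk) ffunE /esrc /etgt /= hu. Qed.

Lemma Rpsi (f2 : {ffun edge G2 -> nat}) (i j : 'I_n.+3) k : (2 <= i)%N -> (k < @mult G1 i j)%N ->
  R G1 (psi f2) i j k = R G2 f2 (dn i) (dn j) k.
Proof. by move=> hi hk; rewrite (@R_lt G1 (psi f2) i j k hk) ffunE /esrc /etgt /= hi. Qed.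

Lemma sol1_zero (v1 : 'I_n.+3 -> int) (f1 : {ffun edge G1 -> nat}) : @is_flow G1 v1 f1 ->
  (forall u : 'I_n.+3, (u <= 1)%N -> v1 u = 0) ->
  forall e : edge G1, (esrc e <= 1)%N -> f1 e = 0%N.
Proof.
move=> Hf Hv.
have Z0 : forall e : edge G1, esrc e = ord0 -> f1 e = 0%N.
  apply: (@zero_out _ _ _ _ Hf (Hv ord0 isT)) => e He.
  by have := acyc1 e; rewrite He.
have h1 : (1 < n.+3)%N by [].
have Z1 : forall e : edge G1, esrc e = Ordinal h1 -> f1 e = 0%N.
  apply: (@zero_out G1 _ _ (Ordinal h1) Hf (Hv (Ordinal h1) isT)) => e He.
  apply: Z0; apply: ord_eq => /=; have := acyc1 e; rewrite He /=; lia.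
move=> e he; case: (ltnP 0 (esrc e)) => h.
  by apply: Z1; apply: ord_eq; move: h he => /=; lia.
by apply: Z0; apply: ord_eq; move: h he => /=; lia.
Qed.

Lemma sol2_zero (v2 : 'I_n.+2 -> int) (f2 : {ffun edge G2 -> nat}) : @is_flow G2 v2 f2 -> v2 ord0 = 0 ->
  forall e : edge G2, esrc e = ord0 -> f2 e = 0%N.
Proof.
move=> Hf Hv; apply: (@zero_out _ _ _ _ Hf Hv) => e He.
by have := acyc2 e; rewrite He.
Qed.

Section Rel.
Variables (f1 : {ffun edge G1 -> nat}) (f2 : {ffun edge G2 -> nat}).
Hypothesis Z1 : forall e : edge G1, (esrc e <= 1)%N -> f1 e = 0%N.
Hypothesis Z2 : forall e : edge G2, esrc e = ord0 -> f2 e = 0%N.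
Hypothesis H : forall (u j : 'I_n.+2) k, (1 <= u)%N -> (k < @mult G2 u j)%N ->
  R G2 f2 u j k = R G1 f1 (lift ord0 u) (lift ord0 j) k.

Lemma N_outs (u : 'I_n.+2) : (1 <= u)%N -> outs G2 f2 u = outs G1 f1 (lift ord0 u).
Proof.
move=> hu; rewrite !outsE [in RHS]big_ord_recl /= kmult_j0 big_geq // add0n.
apply: eq_bigr => j _; rewrite kmult_up //.
by apply: eq_big_nat => k /andP[_ hk]; rewrite H.
Qed.

Lemma N_ins (u : 'I_n.+2) : (1 <= u)%N -> ins G2 f2 u = ins G1 f1 (lift ord0 u).
Proof.
move=> hu; rewrite !insE [in RHS]big_ord_recl /=.
rewrite [X in (_ = X + _)%N]big1 ?add0n => [|k _]; last first.
  by apply: Rzero => e He; apply: Z1; rewrite He.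
apply: eq_bigr => i _; case: (ltnP 0 i) => hi.
  rewrite kmult_up //.
  by apply: eq_big_nat => k /andP[_ hk]; rewrite H.
rewrite !big1 // => k _; apply: Rzero => e He.
  by apply: Z1; rewrite He /= /bump /=; lia.
by apply: Z2; rewrite He; apply: ord_eq => /=; lia.
Qed.

Lemma rel_flow (v1 : 'I_n.+3 -> int) (v2 : 'I_n.+2 -> int) :
  (forall u : 'I_n.+3, (u <= 1)%N -> v1 u = 0) -> v2 ord0 = 0 ->
  (forall u : 'I_n.+2, (1 <= u)%N -> v1 (lift ord0 u) = v2 u) ->
  (@is_flow G1 v1 f1 <-> @is_flow G2 v2 f2).
Proof.
move=> Hv1 Hv2 Hv; split => Hf u.
  case: (ltnP 0 u) => hu.
    by rewrite netflowE N_outs // N_ins // -netflowE Hf Hv.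
  have -> : u = ord0 by case: u hu => m hm /= hu; apply: ord_eq => /=; lia.
  apply: (etrans _ (esym Hv2)); apply: (@Zup G2 (fun i j h => @kacyc _ _ _ _ i j h)) => e he.
  by apply: Z2; apply: ord_eq; move: he => /=; lia.
case: (ltnP 1 u) => hu.
  case: (unliftP ord0 u) => [w Ew|Ew]; last by rewrite Ew in hu.
  have hw : (1 <= w)%N by move: hu; rewrite Ew /= /bump /=; lia.
  by rewrite Ew netflowE -N_outs // -N_ins // -netflowE Hf Hv.
rewrite Hv1 //; apply: (@Zup G1 (fun i j h => @kacyc _ _ _ _ i j h)) => e he.
by apply: Z1; lia.
Qed.
End Rel.

Lemma dn_ge1 (i : 'I_n.+3) : (2 <= i)%N -> (1 <= dn i)%N.
Proof. by move=> h; rewrite /dn inordK; have := ltn_ord i; lia. Qed.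

Lemma mult_dn (i j : 'I_n.+3) : (2 <= i)%N -> (1 <= j)%N ->
  @kmult n c.+1 b c (dn i) (dn j) = @kmult n.+1 1 b c i j.
Proof.
move=> hi hj; rewrite -kmult_up ?lift_dn //; [lia | exact: dn_ge1].
Qed.

Lemma psi_phi (f1 : {ffun edge G1 -> nat}) : (forall e : edge G1, (esrc e <= 1)%N -> f1 e = 0%N) ->
  psi (phi f1) = f1.
Proof.
move=> Z; apply/ffunP => -[[i j] k]; rewrite ffunE /esrc /etgt /=.
have hk : (k < @kmult n.+1 1 b c i j)%N := ltn_ord k.
have hij : (i < j)%N by apply: kacyc; apply: leq_ltn_trans hk.
case: ifP => h2.
  have hj : (1 <= j)%N := leq_ltn_trans (leq0n _) hij.
  have hk2 : (k < @kmult n c.+1 b c (dn i) (dn j))%N by rewrite mult_dn.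
  have hi : (1 <= i)%N := ltnW h2.
  rewrite (Rphi _ _ _ _ (dn_ge1 _ h2) hk2) !lift_dn //.
  exact: (@R_e G1 f1 (existT _ (i, j) k)).
move/negbT: h2; rewrite -ltnNge ltnS => h2.
by rewrite Z.
Qed.

Lemma phi_psi (f2 : {ffun edge G2 -> nat}) : (forall e : edge G2, esrc e = ord0 -> f2 e = 0%N) ->
  phi (psi f2) = f2.
Proof.
move=> Z; apply/ffunP => -[[i j] k]; rewrite ffunE /esrc /etgt /=.
have hk : (k < @kmult n c.+1 b c i j)%N := ltn_ord k.
case: ifP => h1.
  have hk2 : (k < @kmult n.+1 1 b c (lift ord0 i) (lift ord0 j))%N by rewrite kmult_up.
  have h2 : (2 <= lift ord0 i)%N by rewrite /= /bump /=; lia.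
  rewrite (Rpsi _ _ _ _ h2 hk2) !dn_lift.
  exact: (@R_e G2 f2 (existT _ (i, j) k)).
move/negbT: h1; rewrite -ltnNge ltnS leqn0 => /eqP h1.
by rewrite Z //; apply: ord_eq.
Qed.

Lemma up_lt (u j : 'I_n.+2) k : (1 <= u)%N -> (k < @kmult n c.+1 b c u j)%N ->
  (k < @kmult n.+1 1 b c (lift ord0 u) (lift ord0 j))%N.
Proof. by move=> hu; rewrite kmult_up. Qed.

Lemma up_ge2 (u : 'I_n.+2) : (1 <= u)%N -> (2 <= lift ord0 u)%N.
Proof. by rewrite /= /bump /=; lia. Qed.

End Spec.

Theorem proposition5p6 (b n c : nat) (a : nat -> int) :
  (0 < b)%N -> (0 < n)%N ->
  let S : int := \sum_(2 <= j < n.+1) a j in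
  (* a = (0, 0, a_2, ..., a_n, -S), indices 0..n+1 *)
  let va := fun k : nat =>
    if (k <= 1)%N then 0 else if (k <= n)%N then a k else - S in
  (* a~ = (0, a_2, ..., a_n, -S), indices 0..n *)
  let vt := fun k : nat =>
    if (k == 0)%N then 0 else if (k < n)%N then a k.+1 else - S in
  exists K : nat,
    K_eq (@vec_of (kgraph n 1 b c) va) K /\
    K_eq (@vec_of (kgraph n.-1 c.+1 b c) vt) K.
Proof.
move=> _; case: n => [//|n] _ S va vt.
set v1 := @vec_of (G1 n b c) va.
set v2 := @vec_of (G2 n b c) vt.
have Hv1 : forall u : 'I_n.+3, (u <= 1)%N -> v1 u = 0.
  by move=> u h; rewrite /v1 /vec_of /va h.
have Hv2 : v2 ord0 = 0 by [].
have Hv : forall u : 'I_n.+2, (1 <= u)%N -> v1 (lift ord0 u) = v2 u.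
  move=> u h; rewrite /v1 /v2 /vec_of /va /vt /= /bump /= add1n ltnS leqn0.
  by [].
have [K HK] := @flow_finite (G1 n b c) (fun i j h => @kacyc _ _ _ _ i j h) v1.
exists K; split; first exact: HK.
apply: (@count_transport _ _ _ _ (@phi n b c) (@psi n b c) K _ _ _ _ HK).
- move=> f1 Hf.
  have Z1 := @sol1_zero _ _ _ _ _ Hf Hv1.
  have Z2 : forall e : edge (G2 n b c), esrc e = ord0 -> @phi n b c f1 e = 0%N.
    by move=> e He; rewrite ffunE He.
  exact (proj1 (@rel_flow _ _ _ _ _ Z1 Z2 (fun u j k hu hk => @Rphi _ _ _ f1 _ _ _ hu hk) v1 v2 Hv1 Hv2 Hv) Hf).
- move=> f2 Hf.
  have Z2 := @sol2_zero _ _ _ _ _ Hf Hv2.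
  have Z1 : forall e : edge (G1 n b c), (esrc e <= 1)%N -> @psi n b c f2 e = 0%N.
    by move=> e He; rewrite ffunE leqNgt ltnS He.
  have H : forall (u j : 'I_n.+2) k, (1 <= u)%N -> (k < @mult (G2 n b c) u j)%N ->
      R (G2 n b c) f2 u j k = R (G1 n b c) (@psi n b c f2) (lift ord0 u) (lift ord0 j) k.
    by move=> u j k hu hk; rewrite (@Rpsi _ _ _ _ _ _ _ (@up_ge2 _ _ hu) (@up_lt _ _ _ _ _ _ hu hk)) !dn_lift.
  exact (proj2 (@rel_flow _ _ _ _ _ Z1 Z2 H v1 v2 Hv1 Hv2 Hv) Hf).
- by move=> f1 Hf; apply: psi_phi; exact: @sol1_zero _ _ _ _ _ Hf Hv1.
- by move=> f2 Hf; apply: phi_psi; exact: @sol2_zero _ _ _ _ _ Hf Hv2.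
Qed.
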